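(* Let $(X,\mathcal{A},\mu,T)$ be a measure-preserving system ($\mu$ a probability measure) satisfying condition (U1). Let $\{A_n\}_{n\in\mathbb{N}}\subset\mathcal{A}$ satisfy $\sum_{n=1}^\infty\mu(A_n)=\infty$, and suppose there is a constant $C\ge1$ such that $$\sum_{\substack{n,m\in\mathbb{N}\\ n+m\le N}}\mu\big(A_m\cap T^{-n}(A_{m+n})\big)\le C\Big(\sum_{n=1}^N\mu(A_n)\Big)^2$$ for infinitely many $N\in\mathbb{N}$. Then $\mu\big(\limsup_{n\to\infty}T^{-n}(A_n)\big)=1$, i.e. for $\mu$-almost every $x\in X$ one has $T^n(x)\in A_n$ for infinitely many $n$.
   Context: Condition (U1): for every $A\in\mathcal{A}$ there exist a positive sequence $(\varepsilon_n)$ with $\varepsilon_n\to0$ and $n_0\in\mathbb{N}$ (both possibly depending on $A$) such that for all $n\ge n_0$ and all $B\in\mathcal{A}$, $\mu(A\cap T^{-n}(B))\le\mu(A)\mu(B)+\varepsilon_n\mu(B)$. *)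

(* Defs.v *)
From HB Require Import structures.
From mathcomp Require Import all_boot all_order all_algebra.
From mathcomp Require Import all_classical all_reals all_analysis.
Set Implicit Arguments. Unset Strict Implicit. Unset Printing Implicit Defensive.
Import Order.TTheory GRing.Theory Num.Theory.
Local Open Scope classical_set_scope.
Local Open Scope ring_scope.

Definition measure_preserving {d} {X : measurableType d} {R : realType}
  (mu : probability X R) (T : X -> X) : Prop :=
  measurable_fun setT T /\
  forall B, measurable B -> mu (T @^-1` B) = mu B.

Definition condU1 {d} {X : measurableType d} {R : realType}
  (mu : probability X R) (T : X -> X) : Prop :=
  forall A, measurable A ->
    exists eps : nat -> R, (forall n, 0 < eps n) /\ eps @ \oo --> 0 /\
    exists n0 : nat, forall n, (n0 <= n)%N -> forall B, measurable B ->
      (mu (A `&` (iter n T @^-1` B)) <= mu A * mu B + (eps n)%:E * mu B)%E.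

Definition limsup_set {X : Type} (E : nat -> set X) : set X :=
  \bigcap_k \bigcup_(n in [set n | (k <= n)%N]) E n.

(* Main.v *)
Require Import Defs.
From HB Require Import structures.
From mathcomp Require Import all_boot all_order all_algebra.
From mathcomp Require Import all_classical all_reals all_analysis.
From mathcomp Require Import ring lra zify measurable_realfun.
Import Order.TTheory GRing.Theory Num.Theory.
Local Open Scope classical_set_scope.
Local Open Scope ring_scope.
Section Comb.
Context {R : realType}.

Lemma sum_sym (h : nat -> nat -> R) (N : nat) :
  (forall i j, h i j = h j i) ->
  \sum_(1 <= i < N.+1) \sum_(1 <= j < N.+1) h i j =
  \sum_(1 <= i < N.+1) h i i +
  2 * \sum_(1 <= i < N.+1) \sum_(1 <= j < N.+1 | (i < j)%N) h i j.
Proof.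
move=> hs; elim: N => [|N IH].
  by rewrite !big_geq// mulr0 addr0.
rewrite big_nat_recr//= [X in _ = X + _]big_nat_recr//=.
rewrite [X in _ = _ + 2 * X]big_nat_recr//=.
have e1 : \sum_(1 <= i < N.+1) \sum_(1 <= j < N.+2) h i j =
   \sum_(1 <= i < N.+1) \sum_(1 <= j < N.+1) h i j + \sum_(1 <= i < N.+1) h i N.+1.
  by rewrite -big_split /=; apply: eq_bigr => i _; rewrite big_nat_recr.
have e2 : \sum_(1 <= i < N.+1) \sum_(1 <= j < N.+2 | (i < j)%N) h i j =
   \sum_(1 <= i < N.+1) \sum_(1 <= j < N.+1 | (i < j)%N) h i j + \sum_(1 <= i < N.+1) h i N.+1.
  rewrite -big_split /=; apply: eq_big_nat => i /andP[_ iN].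
  by rewrite big_mkcond big_nat_recr//= -big_mkcond /= iN.
have e3 : \sum_(1 <= j < N.+2 | (N.+1 < j)%N) h N.+1 j = 0.
  by rewrite big_nat_cond big1// => j /andP[/andP[_ jN] Nj]; move: jN; rewrite ltnNge Nj.
have e4 : \sum_(1 <= j < N.+2) h N.+1 j = \sum_(1 <= i < N.+1) h i N.+1 + h N.+1 N.+1.
  by rewrite big_nat_recr//=; congr (_ + _); apply: eq_bigr => i _.
rewrite e1 e2 e3 e4 IH addr0; lra.
Qed.
End Comb.
Section Comb2.
Context {R : realType}.
Lemma sum_shift (g : nat -> nat -> R) N :
 \sum_(1 <= n < N.+1) \sum_(1 <= m < N.+1 | (n + m <= N)%N) g m (m + n)%N =
 \sum_(1 <= i < N.+1) \sum_(1 <= j < N.+1 | (i < j)%N) g i j.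
Proof.
under eq_bigr do rewrite big_mkcond.
rewrite exchange_big /=; apply: eq_big_nat => m /andP[m1 mN]; rewrite -big_mkcond /=.
rewrite [RHS](@big_cat_nat _ _ _ m.+1)//=.
rewrite [X in _ = X + _]big_nat_cond [X in _ = X + _]big1 ?add0r; last first.
  by move=> j /andP[/andP[_ jm] mj]; exfalso; move: jm mj; lia.
rewrite -(add1n m) big_addn.
rewrite [LHS](@big_cat_nat _ _ _ (N - m).+1)//=; last first.
  by rewrite ltnS leq_subr.
rewrite [X in _ + X = _]big_nat_cond [X in _ + X = _]big1 ?addr0; last first.
  move=> n /andP[/andP[nm _] nmN]; exfalso; move: nm nmN; lia.
have -> : (N.+1 - m = (N - m).+1)%N by lia.
rewrite big_mkcond [RHS]big_mkcond; apply: eq_big_nat => n /andP[n1 nN].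
have -> : (n + m <= N)%N by lia.
have -> : (m < n + m)%N by lia.
by rewrite addnC.
Qed.
End Comb2.
Lemma indic_ge0 {T : Type} {R : realType} (A : set T) x : 0 <= (\1_A x : R).
Proof. by rewrite indicE ler0n. Qed.

Section SM.
Context d (X : measurableType d) (R : realType) (mu : probability X R).

Lemma mEFin (f : X -> R) : measurable_fun setT f -> measurable_fun setT (EFin \o f).
Proof. move=> mf; exact/(measurable_EFinP _ f). Qed.
Lemma mEFin_indic (B : set X) : measurable B -> measurable_fun setT (EFin \o (\1_B : X -> R)).
Proof. move=> mB; apply: mEFin. exact: measurable_realfun.measurable_indic. Qed.

Lemma finmu (B : set X) : measurable B -> mu B = (fine (mu B))%:E.
Proof. by move=> mB; rewrite fineK// fin_num_measure. Qed.

Lemma int_indic (B : set X) : measurable B ->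
  (\int[mu]_(x in setT) (\1_B x)%:E = (fine (mu B))%:E)%E.
Proof. by move=> mB; rewrite integral_indic// setIT fineK// fin_num_measure. Qed.

Lemma second_moment (s : seq nat) (F : nat -> set X) (U : set X) :
  (forall i, measurable (F i)) -> measurable U ->
  (forall i, i \in s -> F i `<=` U) ->
  (\sum_(i <- s) fine (mu (F i)))^+2 <=
  (\sum_(i <- s) \sum_(j <- s) fine (mu (F i `&` F j))) * fine (mu U).
Proof.
move=> mF mU FU.
pose Z x := \sum_(i <- s) (\1_(F i) x : R).
have Z0 x : 0 <= Z x by apply: sumr_ge0 => i _; exact: indic_ge0.
have mZ : measurable_fun setT Z by apply: measurable_sum => i; exact: measurable_realfun.measurable_indic.
have IZ : (\int[mu]_(x in setT) (Z x)%:E = (\sum_(i <- s) fine (mu (F i)))%:E)%E.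
  rewrite /Z; under eq_integral do rewrite -sumEFin.
  rewrite ge0_integral_sum//; try by [move=> i x _; rewrite lee_fin indic_ge0|
    move=> i; exact: mEFin_indic].
  by rewrite -sumEFin; apply: eq_bigr => i _; rewrite int_indic.
have IZ2 : (\int[mu]_(x in setT) (Z x ^+ 2)%:E =
     (\sum_(i <- s) \sum_(j <- s) fine (mu (F i `&` F j)))%:E)%E.
  have -> : (fun x => (Z x ^+ 2)%:E) = (fun x => \sum_(i <- s) \sum_(j <- s) (\1_(F i `&` F j) x)%:E)%E.
    apply: funext => x; under eq_bigr do rewrite sumEFin.
    rewrite sumEFin; congr (_%:E).
    rewrite expr2 /Z mulr_suml; apply: eq_bigr => i _.
    rewrite mulr_sumr; apply: eq_bigr => j _.
    by rewrite indicI.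
  rewrite ge0_integral_sum//; try by [move=> i x _; apply: sume_ge0 => j _; rewrite lee_fin indic_ge0|
    move=> i; apply: emeasurable_sum => j; exact/mEFin_indic/measurableI].
  rewrite -sumEFin; apply: eq_bigr => i _.
  rewrite ge0_integral_sum//; try by [move=> j x _; rewrite lee_fin indic_ge0|
    move=> j; exact/mEFin_indic/measurableI].
  by rewrite -sumEFin; apply: eq_bigr => j _; rewrite int_indic//; exact: measurableI.
move: IZ IZ2.
set S := \sum_(i <- s) fine (mu (F i)).
set Q := \sum_(i <- s) \sum_(j <- s) fine (mu (F i `&` F j)).
move=> IZ IZ2.
set P := fine (mu U).
have S0 : 0 <= S by apply: sumr_ge0 => i _; exact: fine_ge0.
have P0 : 0 <= P by exact: fine_ge0.
have key : forall l, 0 <= l -> 2 * l * S <= Q + l ^+ 2 * P.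
  move=> l l0.
  have H : (\int[mu]_(x in setT) ((2 * l)%:E * (Z x)%:E) <=
            \int[mu]_(x in setT) ((Z x ^+ 2)%:E + (l ^+ 2)%:E * (\1_U x)%:E))%E.
    apply: ge0_le_integral => //.
    - by move=> x _; rewrite -EFinM lee_fin mulr_ge0// mulr_ge0.
    - by apply: emeasurable_funM; [exact: measurable_cst| exact: mEFin].
    - apply: emeasurable_funD; first by apply/measurable_EFinP; exact: measurable_funM.
      apply: emeasurable_funM; first exact: measurable_cst.
      by apply/measurable_EFinP; exact: measurable_realfun.measurable_indic.
    - move=> x _; rewrite -!EFinM -EFinD lee_fin.
      have [Ux|nUx] := pselect (U x).
        rewrite indicE mem_set// mulr1.
        have := sqr_ge0 (Z x - l); rewrite sqrrB; lra.
      have -> : Z x = 0.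
        rewrite /Z big1_seq// => i /andP[_ si]; rewrite indicE memNset//.
        by move=> /(FU _ si).
      by rewrite mulr0 expr0n /= add0r mulr_ge0 ?sqr_ge0 ?indic_ge0.
  have mZ2 : measurable_fun setT (EFin \o (fun x => Z x ^+ 2)).
    by apply: mEFin; exact: measurable_realfun.measurable_funX.
  have mZ' : measurable_fun setT (EFin \o Z) by exact: mEFin.
  have mU' : measurable_fun setT (EFin \o (\1_U : X -> R)) by exact: mEFin_indic.
  rewrite ge0_integralD// in H; try by [
    apply: emeasurable_funM; [exact: measurable_cst|exact: mU'] |
    move=> x _; rewrite -EFinM lee_fin mulr_ge0 ?sqr_ge0 ?indic_ge0 |
    move=> x _; rewrite lee_fin sqr_ge0].
  rewrite ge0_integralZl_EFin// in H; try by [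
    move=> x _; rewrite lee_fin | rewrite mulr_ge0].
  rewrite ge0_integralZl_EFin// in H; try by [
    move=> x _; rewrite lee_fin indic_ge0 | exact: sqr_ge0].
  rewrite IZ IZ2 int_indic// -!EFinM -EFinD lee_fin in H.
have FP i : i \in s -> fine (mu (F i)) <= P.
  move=> si; apply: fine_le; rewrite ?fin_num_measure //; apply: le_measure; rewrite ?inE //; exact: FU.
have [P00|Pp] := eqVneq P 0.
  have -> : S = 0.
    apply/eqP; rewrite eq_le S0 andbT /S.
    rewrite (@le_trans _ _ (\sum_(i <- s) 0))//; last by rewrite big1.
    rewrite big_seq [X in _ <= X]big_seq.
    by apply: ler_sum => i si; rewrite -P00; exact: FP.
  by rewrite expr0n /= mulr_ge0//; apply: sumr_ge0 => i _; apply: sumr_ge0 => j _; exact: fine_ge0.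
have Pp' : 0 < P by rewrite lt_def Pp P0.
have h := key (S / P) (divr_ge0 S0 P0).
have e : (S / P) ^+ 2 * P = S / P * S by field; rewrite ?Pp.
rewrite e in h.
have h2 : S / P * S <= Q by lra.
have -> : S ^+ 2 = S / P * S * P by field; rewrite ?Pp.
by rewrite ler_wpM2r.
Qed.
End SM.
Lemma sum_lo_le {R : realType} (f : nat -> R) lo1 lo2 hi : (lo1 <= lo2)%N ->
  (forall i, 0 <= f i) -> \sum_(lo2 <= i < hi) f i <= \sum_(lo1 <= i < hi) f i.
Proof.
move=> l12 f0; case: (leqP lo2 hi) => h.
  by rewrite (@big_cat_nat _ _ _ lo2 lo1 hi)//= lerDr sumr_ge0.
by rewrite big_geq ?sumr_ge0// ltnW.
Qed.

Lemma sum_hi_le {R : realType} (f : nat -> R) lo hi1 hi2 : (hi1 <= hi2)%N ->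
  (forall i, 0 <= f i) -> \sum_(lo <= i < hi1) f i <= \sum_(lo <= i < hi2) f i.
Proof.
move=> h12 f0; case: (leqP lo hi1) => h.
  by rewrite [X in _ <= X](@big_cat_nat _ _ _ hi1 lo hi2)//= lerDl sumr_ge0.
by rewrite big_geq ?sumr_ge0// ltnW.
Qed.

Lemma iter_pres d (X : measurableType d) (R : realType) (mu : probability X R) (T : X -> X) :
  measure_preserving mu T -> forall k B, measurable B ->
  measurable (iter k T @^-1` B) /\ mu (iter k T @^-1` B) = mu B.
Proof.
move=> [mT pT]; elim=> [|k IH] B mB; first by split.
have mTB : measurable (T @^-1` B) by rewrite -(setTI (T @^-1` B)); exact: mT.
have [h1 h2] := IH _ mTB.
split; first exact: h1.
by transitivity (mu (T @^-1` B)); [exact: h2 | exact: pT].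
Qed.

Lemma divS d (X : measurableType d) (R : realType) (mu : probability X R) (A : nat -> set X) :
  (forall n, measurable (A n)) ->
  (\sum_(1 <= n <oo) mu (A n) = +oo)%E ->
  forall r : R, exists M : nat, r <= \sum_(1 <= n < M.+1) fine (mu (A n)).
Proof.
move=> mA divA r; apply/not_existsP => H.
have a0 n : 0 <= fine (mu (A n)) by apply: fine_ge0.
have : (\sum_(1 <= n <oo) mu (A n) <= r%:E)%E.
  apply: lime_le; first by apply: is_cvg_nneseries.
  apply: nearW => N.
  have -> : (\sum_(1 <= n < N) mu (A n) = (\sum_(1 <= n < N) fine (mu (A n)))%:E)%E.
    by rewrite -sumEFin; apply: eq_bigr => n _; rewrite fineK// fin_num_measure.
  rewrite lee_fin; apply: (@le_trans _ _ (\sum_(1 <= n < N.+1) fine (mu (A n)))).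
    by apply: sum_hi_le => //; exact: leqnSn.
  by apply/ltW; rewrite ltNge; apply/negP; exact: H.
by rewrite divA leye_eq.
Qed.
Theorem mainTheorem18 (d : measure_display) (X : measurableType d) (R : realType)
  (mu : probability X R) (T : X -> X) (A : nat -> set X) (C : R) :
  measure_preserving mu T ->
  condU1 mu T ->
  (forall n, measurable (A n)) ->
  (\sum_(1 <= n <oo) mu (A n) = +oo)%E ->
  1 <= C ->
  (forall M : nat, exists N : nat, (M <= N)%N /\
    (\sum_(1 <= n < N.+1) \sum_(1 <= m < N.+1 | (n + m <= N)%N)
        mu (A m `&` (iter n T @^-1` A (m + n)%N))
     <= C%:E * (\sum_(1 <= n < N.+1) mu (A n)) ^+ 2)%E) ->
  mu (limsup_set (fun n => iter n T @^-1` A n)) = 1%E.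
Proof.
move=> mp U1 mA divA C1 HN.
have ip := @iter_pres _ _ _ _ _ mp.
pose E n := iter n T @^-1` A n.
have mE n : measurable (E n) := (ip n (A n) (mA n)).1.
have muE n : mu (E n) = mu (A n) := (ip n _ (mA n)).2.
pose a n := fine (mu (A n)).
have a0 n : 0 <= a n by apply: fine_ge0.
have fm (B : set X) : measurable B -> mu B = (fine (mu B))%:E.
  by move=> mB; rewrite fineK// fin_num_measure.
change (mu (limsup_set E) = 1%E).
set L := limsup_set E.
have mL : measurable L.
  by apply: bigcapT_measurable => k; apply: bigcup_measurable => n _; exact: mE.
have muG : mu (~` L) = (1 - fine (mu L))%:E by rewrite probability_setC// (fm L mL).
set g := 1 - fine (mu L).
have g0 : 0 <= g by rewrite -lee_fin -muG.
suff : g = 0.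
  by rewrite /g => /eqP; rewrite subr_eq0 => /eqP h; rewrite (fm L mL) -h.
apply/eqP; rewrite eq_le g0 andbT; apply/negP => /negP; rewrite -ltNge => gpos.
have [eps [eps0 [epsc [n0 Hn0]]]] := U1 L mL.
have [K0 _ HK0] := cvgr_dist_lt _ _ epsc _ (divr_gt0 gpos (@ltr0Sn R 1)).
pose K := maxn 1 (maxn n0 K0).
pose F n := E n `\` L.
have mF n : measurable (F n) by apply: measurableD.
have lowF n : (K <= n)%N -> g / 2 * a n <= fine (mu (F n)).
  move=> Kn.
  have nn0 : (n0 <= n)%N by move: Kn; rewrite /K; lia.
  have nK0 : (K0 <= n)%N by move: Kn; rewrite /K; lia.
  have := HK0 n nK0; rewrite /= sub0r normrN ger0_norm ?(ltW (eps0 n)) // => epsn.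
  have H := Hn0 n nn0 (A n) (mA n).
  have mLE : measurable (L `&` E n) by apply: measurableI.
  rewrite (fm _ mLE) (fm _ mL) (fm _ (mA n)) -!EFinM -EFinD lee_fin in H.
  have Hs : mu (E n) = (mu (F n) + mu (L `&` E n))%E.
    by rewrite setIC; exact: measureDI.
  rewrite muE (fm _ (mA n)) (fm _ (mF n)) (fm _ mLE) -EFinD in Hs.
  case: Hs => Hs.
  have gl : fine (mu L) = 1 - g by rewrite /g; ring.
  rewrite gl -/(a n) in H; rewrite -/(a n) in Hs.
  have pr : 0 <= (g / 2 - eps n) * a n by apply: mulr_ge0 => //; lra.
  nra.
pose V k := (\bigcup_(n in [set n | (k <= n)%N]) E n) `\` L.
have mV k : measurable (V k).
  by apply: measurableD => //; apply: bigcup_measurable => n _; exact: mE.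
have Vcvg : (mu \o V) @ \oo --> 0%E.
  have -> : 0%E = mu (\bigcap_k V k).
    rewrite (_ : \bigcap_k V k = set0) ?measure0 //.
    apply/seteqP; split => x // Hx; exfalso.
    have [_ nLx] := Hx 0%N I; apply: nLx => k _.
    by have [] := Hx k I.
  apply: nonincreasing_cvg_mu => //.
  - by rewrite ltey_eq fin_num_measure.
  - by apply: bigcapT_measurable.
  - move=> i j ij; apply/subsetPset => x [[n /= jn En] nL]; split => //.
    by exists n => //=; exact: leq_trans ij jn.
pose delta := g ^+ 2 / (24 * C).
have Vge k : (K <= k)%N -> delta <= fine (mu (V k)).
  move=> Kk.
  have k1 : (1 <= k)%N by move: Kk; rewrite /K; lia.
  set T0 := \sum_(1 <= n < k) a n.
  have T00 : 0 <= T0 by apply: sumr_ge0.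
  have [M HM] := @divS _ _ _ _ _ mA divA (4 * T0 + 1).
  have [N [MN HNN]] := HN (maxn M k).
  have MN' : (M <= N)%N by move: MN; lia.
  have kN : (k <= N)%N by move: MN; lia.
  pose h i j := fine (mu (E i `&` E j)).
  pose DN := \sum_(1 <= n < N.+1) \sum_(1 <= m < N.+1 | (n + m <= N)%N) h m (m + n)%N.
  have Eeq m n : mu (A m `&` iter n T @^-1` A (m + n)%N) = mu (E m `&` E (m + n)%N).
    have mB : measurable (A m `&` iter n T @^-1` A (m + n)%N).
      by apply: measurableI => //; exact: (ip n _ (mA _)).1.
    rewrite -(ip m _ mB).2; congr (mu _); rewrite preimage_setI; congr (_ `&` _).
    by apply/seteqP; split => x; rewrite /preimage /E /= -iterD (addnC n m).
  have HD : DN <= C * (\sum_(1 <= n < N.+1) a n) ^+ 2.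
    have e1 : (\sum_(1 <= n < N.+1) \sum_(1 <= m < N.+1 | (n + m <= N)%N)
        mu (A m `&` iter n T @^-1` A (m + n)%N) = DN%:E)%E.
      rewrite /DN -sumEFin; apply: eq_bigr => n _; rewrite -sumEFin; apply: eq_bigr => m _.
      by rewrite Eeq /h fineK// fin_num_measure//; exact: measurableI.
    have e2 : (\sum_(1 <= n < N.+1) mu (A n) = (\sum_(1 <= n < N.+1) a n)%:E)%E.
      by rewrite -sumEFin; apply: eq_bigr => n _; rewrite /a fineK // fin_num_measure.
    by move: HNN; rewrite e1 e2 -EFin_expe -EFinM lee_fin.
  set SN := \sum_(1 <= n < N.+1) a n in HD.
  have SNge : 4 * T0 + 1 <= SN.
    by apply: (le_trans HM); apply: sum_hi_le.
  have SNsplit : SN = T0 + \sum_(k <= n < N.+1) a n.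
    by rewrite /SN /T0 (@big_cat_nat _ _ _ k) //; lia.
  have Ssum_ge : g / 2 * (SN - T0) <= \sum_(k <= n < N.+1) fine (mu (F n)).
    rewrite SNsplit (addrC T0) addrK mulr_sumr; apply: ler_sum_nat => n /andP[kn _].
    by apply: lowF; exact: leq_trans Kk kn.
  have FU : forall i, i \in index_iota k N.+1 -> F i `<=` V k.
    move=> i; rewrite mem_index_iota => /andP[ki _] x [Ex nLx]; split => //.
    by exists i.
  have SM := @second_moment _ _ _ mu (index_iota k N.+1) F (V k) mF (mV k) FU.
  set Q := \sum_(i <- index_iota k N.+1) _ in SM.
  have Qle : Q <= SN + 2 * DN.
    have Q1 : Q <= \sum_(1 <= i < N.+1) \sum_(1 <= j < N.+1) h i j.
      apply: (@le_trans _ _ (\sum_(k <= i < N.+1) \sum_(1 <= j < N.+1) h i j)).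
        apply: ler_sum => i _; apply: (@le_trans _ _ (\sum_(k <= j < N.+1) h i j)).
          apply: ler_sum => j _; apply: fine_le; rewrite ?fin_num_measure //;
            try exact: measurableI.
          apply: le_measure; rewrite ?inE; try exact: measurableI.
          by move=> x [[? _] [? _]]; split.
        by apply: sum_lo_le => // j; exact: fine_ge0.
      by apply: sum_lo_le => // i; apply: sumr_ge0 => j _; exact: fine_ge0.
    rewrite (@sum_sym _ h) in Q1; last by move=> i j; rewrite /h setIC.
    have ediag : \sum_(1 <= i < N.+1) h i i = SN.
      by apply: eq_bigr => i _; rewrite /h setIid muE.
    by rewrite ediag -(sum_shift h) -/DN in Q1.
  set sig := \sum_(i <- index_iota k N.+1) fine (mu (F i)) in SM Ssum_ge.
  set u := fine (mu (V k)) in SM *.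
  have u0 : 0 <= u by apply: fine_ge0.
  have x1 : 1 <= SN by lra.
  have h1 : 3 * g * SN / 8 <= sig.
    apply: le_trans Ssum_ge.
    have : 0 <= g * (SN / 4 - T0) by apply: mulr_ge0; lra.
    nra.
  have h10 : 0 <= 3 * g * SN / 8 by apply: divr_ge0 => //; apply: mulr_ge0 => //; lra.
  have h2 : (3 * g * SN / 8) ^+ 2 <= sig ^+ 2.
    by rewrite !expr2; apply: ler_pM => //.
  have h3 : Q <= 3 * C * SN ^+ 2.
    have : SN <= C * SN ^+ 2.
      have : SN <= SN ^+ 2 by rewrite expr2 ler_peMl //; lra.
      have : 0 <= (C - 1) * SN ^+ 2 by apply: mulr_ge0; [lra| exact: sqr_ge0].
      nra.
    lra.
  have h4 : Q * u <= 3 * C * SN ^+ 2 * u by apply: ler_wpM2r.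
  have h5 : 9 / 64 * g ^+ 2 * SN ^+ 2 <= 3 * C * u * SN ^+ 2.
    have e : (3 * g * SN / 8) ^+ 2 = 9 / 64 * g ^+ 2 * SN ^+ 2 by field.
    rewrite -e; apply: le_trans h2 _; apply: le_trans SM _; apply: le_trans h4 _.
    by rewrite [X in _ <= X]mulrAC.
  have SN2 : 0 < SN ^+ 2 by apply: exprn_gt0; lra.
  rewrite ler_pM2r // in h5.
  rewrite /delta ler_pdivrMr; last by lra.
  have : 0 <= C * u by apply: mulr_ge0 => //; lra.
  lra.
have : (delta%:E <= lim ((mu \o V) @ \oo))%E.
  apply: lime_ge; first by apply/cvg_ex; exists 0%E.
  by exists K => // k /= Kk; rewrite (fm _ (mV k)) lee_fin; exact: Vge.
rewrite (cvg_lim _ Vcvg)// lee_fin leNgt => /negP; apply.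
by rewrite /delta divr_gt0// ?exprn_gt0// mulr_gt0//; lra.
Qed.
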